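(* Let $f,g\colon X\to Y$ be morphisms in $\mathbf{CompOrd}$ having a common retraction $k\colon Y\to X$ (i.e. $k\circ f=k\circ g=1_X$), let $h\colon E\to X$ be an equalizer of $f$ and $g$ in $\mathbf{CompOrd}$, and let $K$ be a closed subset of $X$. Then: (1) if $\uparrow f[K]=\uparrow g[K]$, then $\uparrow K=\uparrow(K\cap\operatorname{im}h)$; (2) if $\downarrow f[K]=\downarrow g[K]$, then $\downarrow K=\downarrow(K\cap\operatorname{im}h)$; (3) if $\updownarrow f[K]=\updownarrow g[K]$, then $\updownarrow K=\updownarrow(K\cap\operatorname{im}h)$.
   Context: $\mathbf{CompOrd}$ is the category of compact ordered spaces (compact Hausdorff spaces with a partial order closed in $X\times X$) and continuous order-preserving maps. For a subset $Y$ of a poset, $\uparrow Y$, $\downarrow Y$ denote up- and down-closure and $\updownarrow Y=\uparrow Y\cap\downarrow Y$. *)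

(* Defs.v *)
From HB Require Import structures.
From mathcomp Require Import all_boot all_order.
From mathcomp Require Import all_classical topology.
Set Implicit Arguments. Unset Strict Implicit. Unset Printing Implicit Defensive.
Local Open Scope classical_set_scope.

Record isCompOrd (T : topologicalType) (le : T -> T -> Prop) : Prop := {
  co_refl : forall x, le x x;
  co_antisym : forall x y, le x y -> le y x -> x = y;
  co_trans : forall x y z, le x y -> le y z -> le x z;
  co_closed : closed [set p : T * T | le p.1 p.2];
  co_compact : compact [set: T];
  co_hausdorff : hausdorff_space T }.

Record compOrd := CompOrd {
  co_sort :> topologicalType;
  co_le : co_sort -> co_sort -> Prop;
  co_ax : isCompOrd co_le }.

Definition co_mor (X Y : compOrd) (f : X -> Y) : Prop :=
  continuous f /\ forall x y : X, co_le x y -> co_le (f x) (f y).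

Definition upc (X : compOrd) (A : set X) : set X :=
  [set y | exists2 x, A x & co_le x y].
Definition downc (X : compOrd) (A : set X) : set X :=
  [set y | exists2 x, A x & co_le y x].
Definition updownc (X : compOrd) (A : set X) : set X := upc A `&` downc A.

Definition is_equalizer (X Y E : compOrd) (f g : X -> Y) (h : E -> X) : Prop :=
  co_mor h /\ f \o h = g \o h /\
  forall (Z : compOrd) (u : Z -> X), co_mor u -> f \o u = g \o u ->
    exists! v : Z -> E, co_mor v /\ h \o v = u.

(* Main.v *)
Require Import Defs.
From mathcomp Require Import all_boot all_order.
From mathcomp Require Import all_classical topology.
Local Open Scope classical_set_scope.
Set Implicit Arguments.

Lemma closed_lower (T : topologicalType) (le : T -> T -> Prop) c :
  closed [set p : T * T | le p.1 p.2] ->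
  closed [set z | le z c] /\ closed [set z | le c z].
Proof.
move=> cl; split.
- have -> : [set z | le z c] = (fun z => (z, c)) @^-1` [set p : T * T | le p.1 p.2] by [].
  apply: (proj1 (continuous_closedP _) _ _ cl) => z.
  by apply: cvg_pair => //; apply: cvg_cst.
- have -> : [set z | le c z] = (fun z => (c, z)) @^-1` [set p : T * T | le p.1 p.2] by [].
  apply: (proj1 (continuous_closedP _) _ _ cl) => z.
  by apply: cvg_pair => //; apply: cvg_cst.
Qed.
Lemma exists_min (T : topologicalType) (le : T -> T -> Prop) (K : set T) x :
  (forall x, le x x) -> (forall x y, le x y -> le y x -> x = y) ->
  (forall x y z, le x y -> le y z -> le x z) ->
  (forall c, closed [set z | le z c]) -> compact [set: T] -> closed K -> K x ->
  exists m, [/\ K m, le m x & forall y, K y -> le y m -> y = m].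
Proof.
move=> refl anti tr clc cpt clK Kx.
pose S := {y : T | K y /\ le y x}.
pose R := fun a b : S => `[< le (sval b) (sval a) >].
have [||||t tmax] := @Zorn S R.
- by move=> a; apply/asboolP.
- by move=> a b c /asboolP h1 /asboolP h2; apply/asboolP; exact: tr h2 h1.
- move=> [a Pa] [b Pb] /asboolP /= h1 /asboolP /= h2.
  have eab : a = b by exact: anti.
  by subst b; congr exist; exact: Prop_irrelevance.
- move=> A Atot.
  have [[a0 A0]|A0] := pselect (exists a, A a); last first.
    exists (exist _ x (conj Kx (refl x))) => s As; exfalso; apply: A0; by exists s.
  pose B := fun s : S => K `&` [set z | le z (sval s)].
  pose F := filter_from A B.
  have FF : ProperFilter F.
    apply: filter_from_proper.
      apply: filter_from_filter; first by exists a0.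
      move=> i j Ai Aj; have [/asboolP h|/asboolP h] := Atot i j Ai Aj.
        exists j => // z [Kz lz]; split; split => //; exact: tr lz h.
      exists i => // z [Kz lz]; split; split => //; exact: tr lz h.
    move=> i _; exists (sval i); split; [exact: (proj1 (svalP i))|exact: refl].
  have [p [_ clp]] := cpt F FF (filterT).
  have Bp : forall s, A s -> B s p.
    move=> s As.
    have clB : closed (B s) by apply: closedI.
    apply: clB => U Up.
    have := clp (B s) U _ Up; apply.
    by exists s.
  have [Kp lp] := Bp a0 A0.
  have Sp : K p /\ le p x by split => //; exact: tr lp (proj2 (svalP a0)).
  exists (exist _ p Sp) => s As; apply/asboolP => /=.
  exact: (proj2 (Bp s As)).
exists (sval t); split; [exact: (proj1 (svalP t))|exact: (proj2 (svalP t))|].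
move=> y Ky lyt.
have Sy : K y /\ le y x by split => //; exact: tr lyt (proj2 (svalP t)).
have := tmax (exist _ y Sy); rewrite /R /=.
move=> /(_ (asboolT lyt)) <-. by [].
Qed.

Lemma up_pick (X Y : compOrd) (f g : X -> Y) (K : set X) :
  upc (f @` K) = upc (g @` K) -> forall z, K z -> exists c, K c /\ co_le (g c) (f z).
Proof.
move=> E z Kz.
have : upc (f @` K) (f z) by exists (f z); [exists z|apply: (co_refl (co_ax Y))].
by rewrite E => -[_ [c Kc <-] l]; exists c.
Qed.

Lemma down_pick (X Y : compOrd) (f g : X -> Y) (K : set X) :
  downc (f @` K) = downc (g @` K) -> forall z, K z -> exists c, K c /\ co_le (f z) (g c).
Proof.
move=> E z Kz.
have : downc (f @` K) (f z) by exists (f z); [exists z|apply: (co_refl (co_ax Y))].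
by rewrite E => -[_ [c Kc <-] l]; exists c.
Qed.

Lemma updown_pick (X Y : compOrd) (f g : X -> Y) (K : set X) :
  updownc (f @` K) = updownc (g @` K) -> forall z, K z ->
  (exists c, K c /\ co_le (g c) (f z)) /\ (exists c, K c /\ co_le (f z) (g c)).
Proof.
move=> E z Kz.
have : updownc (f @` K) (f z).
  by split; exists (f z); (try by exists z); apply: (co_refl (co_ax Y)).
rewrite E => -[[_ [c Kc <-] l] [_ [d Kd <-] l']].
by split; [exists c|exists d].
Qed.

Lemma in_range (X Y E : compOrd) (f g : X -> Y) (h : E -> X) m :
  is_equalizer f g h -> f m = g m -> range h m.
Proof.
move=> [_ [_ U]] fg.
have [v [[_ hv] _]] := U X (fun _ => m) (conj (@cst_continuous X X m)
   (fun _ _ _ => co_refl (co_ax X) m)) (funext (fun _ => fg)).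
by exists (v m) => //; have := congr1 (fun F => F m) hv.
Qed.

Lemma core_min (X Y E : compOrd) (f g : X -> Y) (k : Y -> X) (h : E -> X)
  (K : set X) x :
  co_mor k -> k \o f = id -> k \o g = id -> is_equalizer f g h -> closed K ->
  (forall z, K z -> (exists c, K c /\ co_le (g c) (f z)) /\
                    (exists c, K c /\ co_le (f c) (g z))) ->
  K x -> exists2 m, (K `&` range h) m & co_le m x.
Proof.
move=> [_ km] kf kg eq clK H Kx.
have ax := co_ax X.
have [m [Km lmx mmin]] := @exists_min X (@co_le X) K x (co_refl ax) (co_antisym ax)
  (co_trans ax) (fun c => proj1 (@closed_lower X _ c (co_closed ax))) (co_compact ax) clK Kx.
have kfE z : k (f z) = z by exact: (congr1 (fun F => F z) kf).
have kgE z : k (g z) = z by exact: (congr1 (fun F => F z) kg).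
have [[c [Kc lc]] [d [Kd ld]]] := H m Km.
have cm : c = m by apply: mmin => //; rewrite -(kgE c) -(kfE m); exact: km.
have dm : d = m by apply: mmin => //; rewrite -(kfE d) -(kgE m); exact: km.
subst c d.
have fg : f m = g m by apply: (co_antisym (co_ax Y)).
by exists m => //; split => //; exact: in_range eq fg.
Qed.

Lemma core_max (X Y E : compOrd) (f g : X -> Y) (k : Y -> X) (h : E -> X)
  (K : set X) x :
  co_mor k -> k \o f = id -> k \o g = id -> is_equalizer f g h -> closed K ->
  (forall z, K z -> (exists c, K c /\ co_le (f z) (g c)) /\
                    (exists c, K c /\ co_le (g z) (f c))) ->
  K x -> exists2 m, (K `&` range h) m & co_le x m.
Proof.
move=> [_ km] kf kg eq clK H Kx.
have ax := co_ax X.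
have [m [Km lmx mmin]] := @exists_min X (fun a b : X => co_le b a) K x (co_refl ax)
  (fun a b h1 h2 => co_antisym ax h2 h1)
  (fun a b c h1 h2 => co_trans ax h2 h1)
  (fun c => proj2 (@closed_lower X _ c (co_closed ax))) (co_compact ax) clK Kx.
have kfE z : k (f z) = z by exact: (congr1 (fun F => F z) kf).
have kgE z : k (g z) = z by exact: (congr1 (fun F => F z) kg).
have [[c [Kc lc]] [d [Kd ld]]] := H m Km.
have cm : c = m by apply: mmin => //; rewrite -(kgE c) -(kfE m); exact: km.
have dm : d = m by apply: mmin => //; rewrite -(kfE d) -(kgE m); exact: km.
subst c d.
have fg : f m = g m by apply: (co_antisym (co_ax Y)).
by exists m => //; split => //; exact: in_range eq fg.
Qed.

Unset Implicit Arguments.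

Theorem lemma3p22 (X Y E : compOrd) (f g : X -> Y) (k : Y -> X) (h : E -> X)
  (K : set X) :
  co_mor f -> co_mor g -> co_mor k ->
  k \o f = id -> k \o g = id ->
  is_equalizer f g h ->
  closed K ->
  [/\ upc (f @` K) = upc (g @` K) -> upc K = upc (K `&` range h),
      downc (f @` K) = downc (g @` K) -> downc K = downc (K `&` range h)
    & updownc (f @` K) = updownc (g @` K) ->
      updownc K = updownc (K `&` range h)].
Proof.
move=> _ _ mk kf kg eq clK.
have ax := co_ax X.
have upsub : upc (K `&` range h) `<=` upc K by move=> y [x [Kx _] l]; exists x.
have dnsub : downc (K `&` range h) `<=` downc K by move=> y [x [Kx _] l]; exists x.
split.
- move=> E0; apply/seteqP; split => // y [x Kx lxy].
  have [m Hm lm] := @core_min _ _ _ _ _ _ _ _ x mk kf kg eq clK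
    (fun z Kz => conj (@up_pick _ _ _ _ _ E0 z Kz) (@up_pick _ _ _ _ _ (esym E0) z Kz)) Kx.
  by exists m => //; exact: (co_trans ax lm lxy).
- move=> E0; apply/seteqP; split => // y [x Kx lxy].
  have [m Hm lm] := @core_max _ _ _ _ _ _ _ _ x mk kf kg eq clK
    (fun z Kz => conj (@down_pick _ _ _ _ _ E0 z Kz) (@down_pick _ _ _ _ _ (esym E0) z Kz)) Kx.
  by exists m => //; exact: (co_trans ax lxy lm).
- move=> E0; apply/seteqP; split; last by move=> y [/upsub ? /dnsub ?].
  move=> y [[x Kx lxy] [x' Kx' lyx']].
  have [m Hm lm] := @core_min _ _ _ _ _ _ _ _ x mk kf kg eq clK
    (fun z Kz => conj (proj1 (@updown_pick _ _ _ _ _ E0 z Kz)) (proj1 (@updown_pick _ _ _ _ _ (esym E0) z Kz))) Kx.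
  have [m' Hm' lm'] := @core_max _ _ _ _ _ _ _ _ x' mk kf kg eq clK
    (fun z Kz => conj (proj2 (@updown_pick _ _ _ _ _ E0 z Kz)) (proj2 (@updown_pick _ _ _ _ _ (esym E0) z Kz))) Kx'.
  split; [exists m => //; exact: (co_trans ax lm lxy)|exists m' => //; exact: (co_trans ax lyx' lm')].
Qed.
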